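(* Consider the generic SURQT model (6) described in the context, and let $\mathbf{Q}_1=\frac{\partial\mathbf{f}(\mathbf 0)}{\partial\mathbf{x}}-\mathbf{D}_\theta$. If $s(\mathbf{Q}_1)<0$, then the rumor-free equilibrium $\mathbf{E}_0=(\mathbf 0,\mathbf 1)$ attracts $\Omega$: every solution with initial value in $\Omega$ satisfies $\mathbf{R}(t)\to\mathbf 0$ and $\mathbf{T}(t)\to\mathbf 1$ as $t\to\infty$. Consequently $R(t)=\frac1N\sum_iR_i(t)\to0$ and $T(t)=\frac1N\sum_iT_i(t)\to1$.
   Context: $V=\{1,\dots,N\}$; $G_R=(V,E_R)$ and $G_T=(V,E_T)$ are strongly connected directed graphs. $\theta_i>0,\delta_i>0$; $\mathbf{D}_\theta=\mathrm{diag}(\theta_i)$. The functions $f_i^T,g_i^R:\mathbb{R}^N\to\mathbb{R}$ satisfy: (C1) $f_i^T$ depends on $x_j$ iff $(i,j)\in E_R$, $g_i^R$ depends on $x_j$ iff $(i,j)\in E_T$; (C2) $f_i^T(\mathbf 0)=g_i^R(\mathbf 0)=0$; (C3) twice continuously differentiable; (C4) strictly increasing in each argument; (C5) concave. $\mathbf{f}=(f_1^T,\dots,f_N^T)^T$ and $\frac{\partial\mathbf{f}(\mathbf 0)}{\partial\mathbf x}$ is its Jacobian at the origin. $s(\mathbf{A})$ is the maximum real part of an eigenvalue of $\mathbf{A}$. The generic SURQT model (6) is, for $i=1,\dots,N$, \[ \frac{dR_i}{dt}=T_i f_i^T(\mathbf{R})-R_i g_i^R(\mathbf{T})-\theta_iR_i,\qquad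 \frac{dT_i}{dt}=R_i g_i^R(\mathbf{T})-T_i f_i^T(\mathbf{R})+\delta_i(1-R_i-T_i), \] on $\Omega=\{(x_1,\dots,x_{2N})\in\mathbb{R}_+^{2N}: x_i+x_{N+i}\le1\}$. *)

(* Defs.v *)
From Stdlib Require Import Reals Relations.
From mathcomp Require Import ssreflect ssrfun ssrbool eqtype ssrnat fintype bigop.
Set Implicit Arguments. Unset Strict Implicit.
Open Scope R_scope.

Definition vec (N : nat) := 'I_N -> R.

Definition sumR (N : nat) (F : 'I_N -> R) : R := \big[Rplus/0]_(j < N) F j.

Definition upd (N : nat) (x : vec N) (j : 'I_N) (t : R) : vec N :=
  fun k => if k == j then t else x k.

Definition distv (N : nat) (x y : vec N) : R := sumR (fun j => Rabs (x j - y j)).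

Definition has_grad (N : nat) (h : vec N -> R) (x gr : vec N) : Prop :=
  forall eps, 0 < eps -> exists del, 0 < del /\
    forall y, distv y x < del ->
      Rabs (h y - h x - sumR (fun j => gr j * (y j - x j))) <= eps * distv y x.

Definition continuous_vec (N : nat) (h : vec N -> R) : Prop :=
  forall x eps, 0 < eps -> exists del, 0 < del /\
    forall y, distv y x < del -> Rabs (h y - h x) < eps.

Definition C2 (N : nat) (h : vec N -> R) : Prop :=
  exists (Dh : vec N -> vec N) (D2h : vec N -> 'I_N -> vec N),
    (forall x, has_grad h x (Dh x)) /\
    (forall x j, has_grad (fun y => Dh y j) x (D2h x j)) /\
    (forall j k, continuous_vec (fun x => D2h x j k)).

Definition partial_deriv (N : nat) (h : vec N -> R) (j : 'I_N) (x : vec N) (l : R) :=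
  derivable_pt_lim (fun t => h (upd x j t)) (x j) l.

Definition depends_on (N : nat) (h : vec N -> R) (j : 'I_N) : Prop :=
  exists x t, h (upd x j t) <> h x.

Definition strictly_incr_in (N : nat) (h : vec N -> R) (j : 'I_N) : Prop :=
  forall x s t, s < t -> h (upd x j s) < h (upd x j t).

Definition concave (N : nat) (h : vec N -> R) : Prop :=
  forall x y l, 0 <= l <= 1 ->
    l * h x + (1 - l) * h y <= h (fun k => l * x k + (1 - l) * y k).

Definition strongly_connected (N : nat) (E : 'I_N -> 'I_N -> Prop) : Prop :=
  forall i j, clos_refl_trans _ E i j.

(* (a + i b) is a (complex) eigenvalue of the real matrix A, with eigenvector
   u + i v <> 0, i.e. A(u + i v) = (a + i b)(u + i v). *)
Definition is_eigenvalue (N : nat) (A : 'I_N -> 'I_N -> R) (a b : R) : Prop :=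
  exists u v : vec N, (exists k, u k <> 0 \/ v k <> 0) /\
    forall i, sumR (fun j => A i j * u j) = a * u i - b * v i /\
              sumR (fun j => A i j * v j) = b * u i + a * v i.

Definition is_spectral_abscissa (N : nat) (A : 'I_N -> 'I_N -> R) (s : R) : Prop :=
  (exists b, is_eigenvalue A s b) /\ (forall a b, is_eigenvalue A a b -> a <= s).

Definition SURQT_solution (N : nat) (f g : 'I_N -> vec N -> R) (theta delta : 'I_N -> R)
    (Rs Ts : R -> vec N) : Prop :=
  (forall t i, 0 < t ->
     derivable_pt_lim (fun s => Rs s i) t
       (Ts t i * f i (Rs t) - Rs t i * g i (Ts t) - theta i * Rs t i) /\
     derivable_pt_lim (fun s => Ts s i) t
       (Rs t i * g i (Ts t) - Ts t i * f i (Rs t) + delta i * (1 - Rs t i - Ts t i))) /\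
  (forall i eps, 0 < eps -> exists del, 0 < del /\ forall t, 0 <= t < del ->
     Rabs (Rs t i - Rs 0 i) < eps /\ Rabs (Ts t i - Ts 0 i) < eps).

Definition in_Omega (N : nat) (x y : vec N) : Prop :=
  forall i, 0 <= x i /\ 0 <= y i /\ x i + y i <= 1.

Definition tends_at_infty (h : R -> R) (l : R) : Prop :=
  forall eps, 0 < eps -> exists M, forall t, M <= t -> Rabs (h t - l) < eps.

(* Main.v *)
Require Import Defs.
From Stdlib Require Import Reals Relations Lra Classical FunctionalExtensionality.
From mathcomp Require Import ssreflect ssrfun ssrbool eqtype ssrnat fintype bigop seq.
From mathcomp Require Import ssralg matrix order.
From mathcomp Require Import Rstruct.
Open Scope R_scope.

Lemma sumR_ring {N} (F : 'I_N -> R) : sumR F = (\sum_(j < N) F j)%R.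
Proof. reflexivity. Qed.

Lemma sumR_ext {N} (F G : 'I_N -> R) : (forall j, F j = G j) -> sumR F = sumR G.
Proof. move=> H; apply: eq_bigr => j _; exact: H. Qed.

Lemma sumR_le {N} (F G : 'I_N -> R) : (forall j, F j <= G j) -> sumR F <= sumR G.
Proof.
move=> H; rewrite /sumR; apply: (big_ind2 (fun a b => a <= b)); first lra.
- move=> ? ? ? ? ? ?; lra.
- move=> j _; exact: H.
Qed.

Lemma sumR_lt {N} (F G : 'I_N -> R) : (0 < N)%nat -> (forall j, F j < G j) -> sumR F < sumR G.
Proof.
case: N F G => // N F G _ H; rewrite !sumR_ring !big_ord_recr /= -!sumR_ring.
have := sumR_le (fun j => F (@widen_ord _ _ (leqnSn N) j)) (fun j => G (@widen_ord _ _ (leqnSn N) j)) (fun j => Rlt_le _ _ (H _)).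
have := H ord_max. change (@GRing.add _) with Rplus. lra.
Qed.

Lemma sumR_add {N} (F G : 'I_N -> R) : sumR (fun j => F j + G j) = sumR F + sumR G.
Proof. by rewrite !sumR_ring big_split. Qed.

Lemma sumR_scal {N} c (F : 'I_N -> R) : sumR (fun j => c * F j) = c * sumR F.
Proof. rewrite !sumR_ring -GRing.mulr_sumr. reflexivity. Qed.

Lemma sumR_opp {N} (F : 'I_N -> R) : sumR (fun j => - F j) = - sumR F.
Proof. rewrite !sumR_ring GRing.sumrN. reflexivity. Qed.

Lemma sumR_0 {N} : sumR (fun _ : 'I_N => 0) = 0.
Proof. by rewrite sumR_ring big1. Qed.

Lemma sumR_delta {N} (i : 'I_N) a : sumR (fun j => if j == i then a else 0) = a.
Proof. rewrite sumR_ring -big_mkcond /= big_pred1_eq. reflexivity. Qed.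

Lemma sumR_delta' {N} (i : 'I_N) (F : 'I_N -> R) : sumR (fun j => (if i == j then 1 else 0) * F j) = F i.
Proof.
rewrite -(sumR_delta i (F i)); apply: sumR_ext => j.
case: eqP => [->|ne]; case: eqP => //; try lra. by move=> e; case: ne.
Qed.

Lemma sumR_ge0 {N} (F : 'I_N -> R) : (forall j, 0 <= F j) -> 0 <= sumR F.
Proof. move=> H; rewrite -(@sumR_0 N); exact: sumR_le. Qed.

Lemma sumR_term {N} (F : 'I_N -> R) i : (forall j, 0 <= F j) -> F i <= sumR F.
Proof.
move=> H; rewrite sumR_ring (bigD1 i) //=.
have [s Hs ->] : exists2 s : R, 0 <= s & (\sum_(j < N | j != i) F j)%R = s.
  eexists; last reflexivity.
  apply: (big_ind (fun a => 0 <= a)) => //; [rewrite -R0E; lra | move=> *; rewrite -RplusE; lra].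
rewrite -RplusE. lra.
Qed.

Lemma sumR_abs {N} (F : 'I_N -> R) : Rabs (sumR F) <= sumR (fun j => Rabs (F j)).
Proof.
rewrite /sumR; apply: (big_ind2 (fun a b => Rabs a <= b)).
- rewrite Rabs_R0; lra.
- move=> a b c d H1 H2; apply: Rle_trans (Rabs_triang _ _) _; lra.
- move=> j _; lra.
Qed.
Lemma argmin {N} (HN : (0 < N)%nat) (F : 'I_N -> R) : exists i, forall j, F i <= F j.
Proof.
case: (@Order.TotalTheory.arg_minP _ _ _ (Ordinal HN) xpredT F isT) => i _ Hi.
exists i => j; apply/RleP; exact: Hi.
Qed.
Lemma sumR_const {N} c : sumR (fun _ : 'I_N => c) = INR N * c.
Proof. rewrite sumR_ring GRing.sumr_const card_ord INRE RmultE GRing.mulr_natl. reflexivity. Qed.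
Section LA.
Import GRing.Theory.
Local Open Scope ring_scope.
Lemma unit_of_inj (F : fieldType) n (K : 'M[F]_n) :
  (forall x : 'cV[F]_n, K *m x = 0 -> x = 0) -> K \in unitmx.
Proof.
move=> Hinj; rewrite unitmxE unitfE -det_tr; apply/negP => /det0P [v vn0 vK].
have : K *m v^T = 0 by rewrite -[K]trmxK -trmx_mul vK trmx0.
move/Hinj => /(congr1 trmx); rewrite trmxK trmx0 => v0.
by rewrite v0 eqxx in vn0.
Qed.
End LA.

Lemma inj_inv (N : nat) (K : 'I_N -> 'I_N -> R) :
  (forall x : vec N, (forall i, sumR (fun j => K i j * x j) = 0) -> forall i, x i = 0) ->
  exists G : 'I_N -> 'I_N -> R,
   (forall (b : vec N) i, sumR (fun j => K i j * sumR (fun k => G j k * b k)) = b i) /\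
   (forall (x : vec N) i, sumR (fun j => G i j * sumR (fun k => K j k * x k)) = x i).
Proof.
move=> Hinj.
pose Km := (\matrix_(i, j) K i j)%R : 'M[R]_N.
have uK : Km \in unitmx.
  apply: unit_of_inj => x Kx0.
  apply/matrixP => i j; rewrite [j]ord1 mxE.
  apply: (Hinj (fun k => x k ord0)) => i'.
  have := congr1 (fun M : 'M[R]_(N,1) => M i' ord0) Kx0.
  rewrite /= !mxE /sumR => H; rewrite -[RHS]H. apply: eq_bigr => k _; by rewrite mxE.
pose Gm := invmx Km.
exists (fun i j => Gm i j); split.
- move=> b i.
  pose bm := (\col_k b k)%R : 'cV[R]_N.
  have := congr1 (fun M : 'M[R]_(N,1) => M i ord0) (mulmxA Km Gm bm).
  rewrite /Gm mulmxV // mul1mx /= !mxE => <-.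
  rewrite /sumR; apply: eq_bigr => j _; rewrite !mxE; congr (_ * _)%R.
  apply: eq_bigr => k _; by rewrite mxE.
- move=> x i.
  pose bm := (\col_k x k)%R : 'cV[R]_N.
  have := congr1 (fun M : 'M[R]_(N,1) => M i ord0) (mulmxA Gm Km bm).
  rewrite /Gm mulVmx // mul1mx /= !mxE => <-.
  rewrite /sumR; apply: eq_bigr => j _; rewrite !mxE; congr (_ * _)%R.
  apply: eq_bigr => k _; by rewrite !mxE.
Qed.

Lemma lowbound {N} (F : 'I_N -> R) : (0 < N)%nat -> (forall i, 0 < F i) ->
  exists m, 0 < m /\ forall i, m <= F i.
Proof.
move=> HN HF.
have Hi : forall i, / F i <= sumR (fun j => / F j).
  move=> i; apply: sumR_term => j; left; apply: Rinv_0_lt_compat; exact: HF.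
have i0 : 'I_N by exact: Ordinal HN.
have S0 : 0 < sumR (fun j => / F j).
  apply: Rlt_le_trans (Hi i0); apply: Rinv_0_lt_compat; exact: HF.
exists (/ sumR (fun j => / F j)); split; first exact: Rinv_0_lt_compat.
move=> i; rewrite -[F i]Rinv_inv; apply: Rinv_le_contravar => //.
apply: Rinv_0_lt_compat; exact: HF.
Qed.

Lemma zmono {N} (K : 'I_N -> 'I_N -> R) (y x : vec N) : (0 < N)%nat ->
  (forall i j, i != j -> K i j <= 0) -> (forall i, 0 < y i) ->
  (forall i, 0 < sumR (fun j => K i j * y j)) ->
  (forall i, 0 <= sumR (fun j => K i j * x j)) -> forall i, 0 <= x i.
Proof.
move=> HN Hz Hy HKy Hx.
have [i0 Hi0] := argmin HN (fun i => x i / y i).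
set l := x i0 / y i0 in Hi0.
have Hxl : forall j, l * y j <= x j.
  move=> j; have := Hi0 j; have := Hy j => yj H.
  apply: (Rmult_le_reg_r (/ y j)); first exact: Rinv_0_lt_compat.
  rewrite Rmult_assoc Rinv_r; lra.
case: (Rle_lt_dec 0 l) => Hl.
  move=> i; have := Hxl i; have := Hy i; nra.
exfalso.
have xi0 : x i0 = l * y i0 by rewrite /l; field; have := Hy i0; lra.
have : sumR (fun j => K i0 j * x j) <= sumR (fun j => l * (K i0 j * y j)).
  apply: sumR_le => j; case: (eqVneq i0 j) => [<-|ne].
    rewrite xi0; lra.
  have := Hz _ _ ne; have := Hxl j; nra.
rewrite sumR_scal; have := Hx i0; have := HKy i0; nra.
Qed.

Definition kd {N} (i j : 'I_N) : R := if i == j then 1 else 0.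

Lemma sum_kd {N} (i : 'I_N) a (P : 'I_N -> 'I_N -> R) (x : vec N) :
  sumR (fun j => (a * kd i j - P i j) * x j) = a * x i - sumR (fun j => P i j * x j).
Proof.
rewrite /Rminus -(sumR_delta' i x) -sumR_scal -sumR_opp -sumR_add.
apply: sumR_ext => j; rewrite /kd; ring.
Qed.

Lemma sum_kd' {N} (i : 'I_N) a (M : 'I_N -> 'I_N -> R) (x : vec N) :
  sumR (fun j => (M i j + a * kd i j) * x j) = sumR (fun j => M i j * x j) + a * x i.
Proof.
rewrite -(sumR_delta' i x) -sumR_scal -sumR_add.
apply: sumR_ext => j; rewrite /kd; ring.
Qed.

Lemma metzler {N} (M : 'I_N -> 'I_N -> R) : (0 < N)%nat ->
  (forall i j, i != j -> 0 <= M i j) ->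
  (forall a (u : vec N), 0 <= a -> (forall i, sumR (fun j => M i j * u j) = a * u i) -> forall i, u i = 0) ->
  exists w : vec N, (forall i, 0 < w i) /\ forall i, sumR (fun j => M i j * w j) < 0.
Proof.
move=> HN Hoff Hnoeig.
set c := 1 + sumR (fun i => Rabs (M i i)).
have c1 : 1 <= c by rewrite /c; have := sumR_ge0 (fun i => Rabs (M i i)) (fun i => Rabs_pos _); lra.
set P := fun i j => M i j + c * kd i j.
have Pge0 : forall i j, 0 <= P i j.
  move=> i j; rewrite /P /kd; case: (eqVneq i j) => [<-|ne].
    have := sumR_term (fun i => Rabs (M i i)) i (fun i => Rabs_pos _).
    have := Rabs_pos (M i i); have := Rle_abs (- M i i); rewrite Rabs_Ropp /c; lra.
  have := Hoff _ _ ne; lra.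
have PM : forall i (y : vec N), sumR (fun j => P i j * y j) = sumR (fun j => M i j * y j) + c * y i.
  move=> i y; exact: sum_kd'.
pose Good t := exists y : vec N, (forall i, 0 <= y i) /\ forall i, sumR (fun j => P i j * y j) < t * y i.
have Pyge0 : forall i (y : vec N), (forall i, 0 <= y i) -> 0 <= sumR (fun j => P i j * y j).
  move=> i y Hy; apply: sumR_ge0 => j; have := Pge0 i j; have := Hy j; nra.
have Goodpos : forall t (y : vec N), 0 < t -> (forall i, 0 <= y i) ->
   (forall i, sumR (fun j => P i j * y j) < t * y i) -> forall i, 0 < y i.
  move=> t y t0 Hy H i; have := H i; have := Pyge0 i y Hy; have := Hy i; nra.
case: (classic (Good c)) => [[y [Hy Hyc]]|Hng].
  exists y; split; first by apply: (Goodpos c y) => //; lra.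
  move=> i; have := Hyc i; rewrite PM; lra.
exfalso.
set T0 := 1 + sumR (fun i => sumR (fun j => P i j)).
have GT0 : Good T0.
  exists (fun _ => 1); split => [i|i]; first lra.
  rewrite Rmult_1_r; have -> : sumR (fun j => P i j * 1) = sumR (fun j => P i j).
    by apply: sumR_ext => j; ring.
  have := sumR_term (fun i => sumR (fun j => P i j)) i (fun i => sumR_ge0 _ (fun j => Pge0 i j)).
  rewrite /T0 /=; lra.
have G2 : forall t t', Good t -> t <= t' -> Good t'.
  move=> t t' [y [Hy H]] tt'; exists y; split => // i; have := H i; have := Hy i; nra.
have G3 : forall t, Good t -> exists e, 0 < e /\ Good (t - e).
  move=> t [y [Hy H]].
  have [m [m0 Hm]] := lowbound (fun i => t * y i - sumR (fun j => P i j * y j)) HN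
     (fun i => ltac:(have := H i; lra)).
  set Y := 1 + sumR y.
  have Yy : forall i, y i < Y by move=> i; have := sumR_term y i Hy; rewrite /Y; lra.
  have Y0 : 0 < Y by have := Yy (Ordinal HN); have := Hy (Ordinal HN); lra.
  exists (m / Y); split; first by apply: Rdiv_lt_0_compat.
  exists y; split => // i.
  have := Hm i => /= Hmi.
  have : m / Y * y i <= m * (y i / Y).
    by rewrite /Rdiv; apply: Req_le; ring.
  have : y i / Y < 1.
    apply: (Rmult_lt_reg_r Y) => //; rewrite /Rdiv Rmult_assoc Rinv_l; [have := Yy i; lra| lra].
  have := Hy i; nra.
set E := fun t => 0 <= t /\ ~ Good t.
have EB : bound E.
  exists T0 => t [t0 Ht]; case: (Rle_lt_dec t T0) => // lt; exfalso; apply: Ht; apply: (G2 T0) => //; lra.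
have Ec : E c by split; [lra|exact: Hng].
have [r [Hub Hlub]] := completeness E EB (ex_intro _ c Ec).
have rc : c <= r by apply: Hub; split => //; lra.
have Gr : ~ Good r.
  move=> Hg; have [e [e0 He]] := G3 r Hg.
  have : r <= r - e; last lra.
  apply: Hlub => t [t0 Ht]; case: (Rle_lt_dec t (r - e)) => // lt; exfalso; apply: Ht; apply: (G2 (r - e)) => //; lra.
have Gt : forall t, r < t -> Good t.
  move=> t rt; apply: NNPP => Hn; have : t <= r; last lra.
  apply: Hub; split => //; lra.
set Kr := fun i j => r * kd i j - P i j.
case: (classic (forall x : vec N, (forall i, sumR (fun j => Kr i j * x j) = 0) -> forall i, x i = 0)) => [Hinj|Hninj]; last first.
  apply: Hninj => x Hx; apply: (Hnoeig (r - c)); first lra.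
  move=> i; have := Hx i; rewrite /Kr sum_kd PM; lra.
have [G [G1 G2']] := inj_inv _ _ Hinj.
set C := sumR (fun j => sumR (fun k => Rabs (G j k))).
have C0 : 0 <= C by apply: sumR_ge0 => j; apply: sumR_ge0 => k; exact: Rabs_pos.
have NC0 : 0 <= INR N * C by apply: Rmult_le_pos => //; exact: pos_INR.
set h := / (4 * (INR N * C + 1)).
have h0 : 0 < h by apply: Rinv_0_lt_compat; lra.
have hNC : h * (4 * (INR N * C + 1)) = 1 by rewrite /h Rinv_l //; lra.
have [y [Hy Hyt]] := Gt (r + h) ltac:(lra).
have ypos := Goodpos (r + h) y ltac:(lra) Hy Hyt.
set Kt := fun i j => (r + h) * kd i j - P i j.
have KtZ : forall i j, i != j -> Kt i j <= 0.
  move=> i j ne; rewrite /Kt /kd (negbTE ne); have := Pge0 i j; lra.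
have Kty : forall i, 0 < sumR (fun j => Kt i j * y j) by move=> i; rewrite /Kt sum_kd; have := Hyt i; lra.
have Ktinj : forall x : vec N, (forall i, sumR (fun j => Kt i j * x j) = 0) -> forall i, x i = 0.
  move=> x Hx i.
  have h1 := zmono Kt y x HN KtZ ypos Kty (fun i => ltac:(rewrite Hx; lra)) i.
  have h2 := zmono Kt y (fun j => - x j) HN KtZ ypos Kty
     (fun i => ltac:(have -> : sumR (fun j => Kt i j * - x j) = - sumR (fun j => Kt i j * x j);
        [rewrite -sumR_opp; apply: sumR_ext => j; ring | rewrite Hx; lra])) i.
  simpl in h2; lra.
have [G' [G'1 _]] := inj_inv _ _ Ktinj.
set x := fun j => sumR (fun k => G' j k * 1).
have Ktx : forall i, sumR (fun j => Kt i j * x j) = 1 by move=> i; exact: G'1.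
have xpos := zmono Kt y x HN KtZ ypos Kty (fun i => ltac:(rewrite Ktx; lra)).
have Krx : forall i, sumR (fun j => Kr i j * x j) = 1 - h * x i.
  move=> i; have := Ktx i; rewrite /Kr /Kt !sum_kd; lra.
set X := sumR x.
have xX : forall i, x i <= X by move=> i; exact: sumR_term.
have X0 : 0 <= X by exact: sumR_ge0.
have xb : forall j, x j <= C * (1 + h * X).
  move=> j; rewrite -(G2' x j); under sumR_ext => k do rewrite Krx.
  apply: Rle_trans (Rle_abs _) _; apply: Rle_trans (sumR_abs _) _.
  apply: Rle_trans (_ : sumR (fun k => Rabs (G j k) * (1 + h * X)) <= _).
    apply: sumR_le => k; rewrite Rabs_mult; apply: Rmult_le_compat_l; first exact: Rabs_pos.
    have := xpos k; have := xX k => ? ?; apply: Rabs_le; split; nra.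
  rewrite (Rmult_comm C); under sumR_ext => k do rewrite Rmult_comm.
  rewrite sumR_scal; apply: Rmult_le_compat_l; first nra.
  exact: (sumR_term (fun j => sumR (fun k => Rabs (G j k))) j (fun j => sumR_ge0 _ (fun k => Rabs_pos _))).
have XB : X <= INR N * C * (1 + h * X).
  apply: Rle_trans (sumR_le _ _ xb) _; rewrite sumR_const; lra.
have hX : h * X <= 1/3.
  have : h * X <= h * (INR N * C) * (1 + h * X) by have := Rmult_le_compat_l h _ _ (Rlt_le _ _ h0) XB; lra.
  have : h * (INR N * C) <= 1/4 by nra.
  have : 0 <= h * X by nra.
  nra.
apply: Gr; exists x; split => // i.
have := Krx i; rewrite /Kr sum_kd; have := xX i; have := xpos i; nra.
Qed.

Lemma nodep_const {N} (h : vec N -> R) j : ~ depends_on h j -> forall x t, h (upd x j t) = h x.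
Proof. move=> Hn x t; apply: NNPP => Hne; apply: Hn; by exists x, t. Qed.
Arguments nodep_const {N h j}.

Lemma coord_mono {N} (h : vec N -> R) :
  (forall j, depends_on h j -> strictly_incr_in h j) ->
  forall x j s t, s <= t -> h (upd x j s) <= h (upd x j t).
Proof.
move=> H x j s t st; case: (classic (depends_on h j)) => [Hd|Hd].
  case: st => st; first by left; apply: (H j Hd).
  by rewrite st; right.
by rewrite !(nodep_const Hd); right.
Qed.

Lemma vec_mono {N} (h : vec N -> R) :
  (forall j, depends_on h j -> strictly_incr_in h j) ->
  forall x y : vec N, (forall k, x k <= y k) -> h x <= h y.
Proof.
move=> H x y Hxy.
pose z n : vec N := fun k => if (k < n)%nat then y k else x k.
have Hz : forall n, h x <= h (z n).
  elim=> [|n IH].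
    right; congr h; apply: functional_extensionality => k; by rewrite /z ltn0.
  apply: Rle_trans IH _.
  case: (ltnP n N) => nN.
    pose n' := Ordinal nN.
    have -> : z n = upd (z n) n' (x n').
      apply: functional_extensionality => k; rewrite /upd /z.
      case: eqP => [->|//]; by rewrite /= ltnn.
    have -> : z n.+1 = upd (z n) n' (y n').
      apply: functional_extensionality => k; rewrite /upd /z ltnS leq_eqVlt.
      case: (eqVneq k n') => [->|ne]; first by rewrite /= eqxx.
      have -> : (nat_of_ord k == n) = false; last by [].
      apply/negP => /eqP e; move/eqP: ne; apply; apply: val_inj; by rewrite /= e.
    apply: coord_mono => //.
  right; congr h; apply: functional_extensionality => k; rewrite /z.
  have k1 : (k < n)%nat by apply: leq_trans (ltn_ord k) nN.
  by rewrite k1 ltnS (ltnW k1).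
have -> : y = z N.
  apply: functional_extensionality => k; by rewrite /z ltn_ord.
exact: Hz.
Qed.

Lemma distv_scale {N} (l : R) (x : vec N) : 0 <= l ->
  distv (fun k => l * x k + (1 - l) * 0) (fun _ => 0) = l * sumR (fun j => Rabs (x j)).
Proof.
move=> l0; rewrite /distv -sumR_scal; apply: sumR_ext => j.
rewrite Rmult_0_r Rplus_0_r Rminus_0_r Rabs_mult Rabs_pos_eq //.
Qed.

Section Fun.
Variable N : nat.
Variable h : vec N -> R.
Variable D : vec N.
Hypothesis Hmono : forall x y : vec N, (forall k, x k <= y k) -> h x <= h y.
Hypothesis Hconc : concave h.
Hypothesis H0 : h (fun _ => 0) = 0.
Hypothesis Hg : has_grad h (fun _ => 0) D.

Lemma L_lin x : h x <= sumR (fun j => D j * x j).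
Proof.
set S := sumR (fun j => Rabs (x j)).
have S0 : 0 <= S by apply: sumR_ge0 => j; exact: Rabs_pos.
apply: Rnot_lt_le => Hlt.
set gap := h x - sumR (fun j => D j * x j).
have gap0 : 0 < gap by rewrite /gap; lra.
have [del [del0 Hdel]] := Hg (gap / (2 * (S + 1))) ltac:(apply: Rdiv_lt_0_compat; lra).
set l := del / (del + 2 * S + 1).
have l0 : 0 < l by apply: Rdiv_lt_0_compat; lra.
have l1 : l <= 1.
  rewrite /l; apply: (Rmult_le_reg_r (del + 2 * S + 1)); first lra.
  rewrite /Rdiv Rmult_assoc Rinv_l; lra.
have lS : l * S < del.
  rewrite /l; apply: (Rmult_lt_reg_r (del + 2 * S + 1)); first lra.
  have -> : del / (del + 2 * S + 1) * S * (del + 2 * S + 1) = del * S by field; lra.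
  nra.
set y := fun k => l * x k + (1 - l) * 0.
have dist : distv y (fun _ => 0) = l * S by rewrite /y distv_scale //; lra.
have Hy := Hdel y ltac:(rewrite dist; lra).
rewrite dist in Hy.
have Hc := Hconc x (fun _ => 0) l ltac:(lra).
rewrite H0 -/y in Hc.
have Ehy : sumR (fun j => D j * (y j - (fun _ => 0) j)) = l * sumR (fun j => D j * x j).
  rewrite -sumR_scal; apply: sumR_ext => j; rewrite /y; ring.
rewrite Ehy in Hy.
rewrite H0 in Hy.
have := Rle_trans _ _ _ (Rle_abs _) Hy.
have : gap / (2 * (S + 1)) * (l * S) <= l * gap / 2.
  rewrite /Rdiv; apply: (Rmult_le_reg_r (2 * (S + 1))); first lra.
  have -> : gap * / (2 * (S + 1)) * (l * S) * (2 * (S + 1)) = gap * l * S by field; lra.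
  have -> : l * gap * / 2 * (2 * (S + 1)) = gap * l * (S + 1) by field.
  nra.
rewrite /gap in gap0 *; nra.
Qed.

Lemma L_D j : partial_deriv h j (fun _ => 0) (D j).
Proof.
rewrite /partial_deriv => eps eps0.
have [del [del0 Hdel]] := Hg (eps / 2) ltac:(lra).
exists (mkposreal del del0) => hh hh0 /= hhd.
have e0 : upd (fun _ => 0) j 0 = (fun _ => 0).
  apply: functional_extensionality => k; rewrite /upd; by case: eqP.
rewrite Rplus_0_l e0 H0.
have dv : distv (upd (fun _ => 0) j hh) (fun _ => 0) = Rabs hh.
  rewrite /distv -(sumR_delta j (Rabs hh)); apply: sumR_ext => k; rewrite /upd.
  case: eqP => _; rewrite ?Rminus_0_r ?Rabs_R0 //.
have Hy := Hdel (upd (fun _ => 0) j hh) ltac:(rewrite dv; exact hhd).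
rewrite dv H0 in Hy.
have Ehy : sumR (fun k => D k * (upd (fun _ => 0) j hh k - (fun _ => 0) k)) = D j * hh.
  rewrite -(sumR_delta j (D j * hh)); apply: sumR_ext => k; rewrite /upd.
  case: eqP => [->|_]; ring.
rewrite Ehy in Hy.
have -> : (h (upd (fun _ => 0) j hh) - 0) / hh - D j = (h (upd (fun _ => 0) j hh) - 0 - D j * hh) / hh.
  by field.
rewrite /Rdiv Rabs_mult Rabs_inv.
have ha := Rabs_pos_lt _ hh0.
apply: (Rmult_lt_reg_r (Rabs hh)) => //.
rewrite Rmult_assoc Rinv_l; last lra.
nra.
Qed.

Lemma L_Dpos j : 0 <= D j.
Proof.
apply: Rnot_lt_le => Dn.
have [del [del0 Hdel]] := Hg (- D j / 2) ltac:(lra).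
set t := del / 2.
have t0 : 0 < t by rewrite /t; lra.
have dv : distv (upd (fun _ => 0) j t) (fun _ => 0) = t.
  rewrite /distv; transitivity (sumR (fun k => if k == j then t else 0)); last exact: sumR_delta.
  apply: sumR_ext => k; rewrite /upd.
  case: eqP => _; rewrite Rminus_0_r; [rewrite Rabs_pos_eq //; lra| exact: Rabs_R0].
have Hy := Hdel (upd (fun _ => 0) j t) ltac:(rewrite dv /t; lra).
rewrite dv H0 in Hy.
have Ehy : sumR (fun k => D k * (upd (fun _ => 0) j t k - (fun _ => 0) k)) = D j * t.
  rewrite -(sumR_delta j (D j * t)); apply: sumR_ext => k; rewrite /upd.
  case: eqP => [->|_]; ring.
rewrite Ehy in Hy.
have hy : 0 <= h (upd (fun _ => 0) j t).
  rewrite -H0; apply: Hmono => k; rewrite /upd; case: eqP => _; rewrite /t; lra.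
have := Rle_abs (h (upd (fun _ => 0) j t) - 0 - D j * t).
have : 0 < - D j * t by apply: Rmult_lt_0_compat; lra.
lra.
Qed.

Lemma L_low eta : 0 <= eta <= 1 -> eta * h (fun _ => -1) <= h (fun _ => - eta).
Proof.
move=> He; have := Hconc (fun _ => -1) (fun _ => 0) eta He.
rewrite H0 => H.
have -> : (fun _ : 'I_N => - eta) = (fun k => eta * (fun _ => -1) k + (1 - eta) * (fun _ => 0) k).
  apply: functional_extensionality => k /=; ring.
lra.
Qed.

End Fun.

Lemma fin_choice_del {I : finType} (P : I -> R -> Prop) :
  (forall j d d', 0 < d' <= d -> P j d -> P j d') ->
  (forall j, exists d, 0 < d /\ P j d) -> exists d, 0 < d /\ forall j, P j d.
Proof.
move=> Hmon H.
suff : forall s : seq I, exists d, 0 < d /\ forall j, j \in s -> P j d.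
  case/(_ (enum I)) => d [d0 Hd]; exists d; split => // j; apply: Hd; by rewrite mem_enum.
elim=> [|j s [d [d0 Hd]]]; first by exists 1; split => //; lra.
have [dj [dj0 Hj]] := H j.
exists (Rmin d dj); split; first by apply: Rmin_pos.
move=> k; rewrite in_cons => /orP [/eqP ->|ks].
  apply: (Hmon _ dj) => //; split; [exact: Rmin_pos|exact: Rmin_r].
apply: (Hmon _ d); [split; [exact: Rmin_pos|exact: Rmin_l]|exact: Hd].
Qed.

Lemma dcont f t l : derivable_pt_lim f t l ->
  forall eps, 0 < eps -> exists del, 0 < del /\ forall s, Rabs (s - t) < del -> Rabs (f s - f t) < eps.
Proof.
move=> Hd eps eps0.
have Hc : continuity_pt f t by apply: (derivable_continuous_pt f t (exist _ l Hd)).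
have [del [del0 H]] := Hc eps eps0.
exists del; split => // s hs.
case: (Req_dec s t) => [->|ne]; first by rewrite Rminus_diag Rabs_R0.
apply: H; split => //; split => //; by auto.
Qed.

Lemma dpos_left f t l : derivable_pt_lim f t l -> 0 < l ->
  exists del, 0 < del /\ forall hh, - del < hh < 0 -> f (t + hh) < f t.
Proof.
move=> Hd l0; have [del Hdel] := Hd (l / 2) ltac:(lra).
exists del; split; first exact: cond_pos.
move=> hh [h1 h2]; have := Hdel hh ltac:(lra) ltac:(rewrite Rabs_left; lra).
move/Rabs_def2 => [H1 H2].
have : 0 < (f (t + hh) - f t) / hh by lra.
move=> Hq.
have : (f (t + hh) - f t) = (f (t + hh) - f t) / hh * hh by field; lra.
nra.
Qed.

Lemma barrier (I : finType) (H dH : I -> R -> R) (a b : R) :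
  a <= b ->
  (forall k t, a < t <= b -> derivable_pt_lim (H k) t (dH k t)) ->
  (forall k eps, 0 < eps -> exists del, 0 < del /\ forall t, a <= t < a + del -> Rabs (H k t - H k a) < eps) ->
  (forall k, 0 < H k a) ->
  (forall k t, a < t <= b -> H k t = 0 -> (forall j, 0 <= H j t) ->
     (forall j s, a <= s < t -> 0 < H j s) -> 0 < dH k t) ->
  forall k t, a <= t <= b -> 0 < H k t.
Proof.
move=> ab Hder Hrc Ha Hkey k0 t0 Ht0.
apply: Rnot_le_lt => Hbad.
pose S t := a <= t <= b /\ forall j s, a <= s <= t -> 0 < H j s.
have Sa : S a.
  split; first lra. move=> j s hs; have -> : s = a by lra. exact: Ha.
have SB : bound S by exists b => t [[_ ?] _].
have [tau [Hub Hlub]] := completeness S SB (ex_intro _ a Sa).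
have atau : a <= tau by apply: Hub.
have taub : tau <= b by apply: Hlub => t [[_ ?] _].
have Hbefore : forall j s, a <= s < tau -> 0 < H j s.
  move=> j s hs; apply: NNPP => Hn.
  have : tau <= s; last lra.
  apply: Hlub => t [[t1 t2] Ht]; apply: Rnot_lt_le => st; apply: Hn; apply: Ht; lra.
have notS : forall t, a <= t <= b -> S t -> t <= tau by move=> t _ St; apply: Hub.
have [d [d0 Hd]] : exists d, 0 < d /\ forall j t, a <= t < a + d -> 0 < H j t.
  apply: (fin_choice_del (fun j d => forall t, a <= t < a + d -> 0 < H j t)).
    move=> j dd d' hd P t ht; apply: P; lra.
  move=> j; have [del [del0 Hdel]] := Hrc j (H j a) (Ha j).
  exists del; split => // t ht; have := Hdel t ht; move/Rabs_def2; lra.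
have ab' : a < b.
  case: ab => // e; exfalso; have e0 : t0 = a by lra. rewrite e0 in Hbad; have := Ha k0; lra.
have taua : a < tau.
  have : Rmin (a + d / 2) b <= tau; last first.
    have := Rmin_glb_lt (a + d/2) b a ltac:(lra) ab'; lra.
  apply: Hub; split; first by split; [have := Rmin_glb (a + d/2) b a ltac:(lra) ltac:(lra); lra| exact: Rmin_r].
  move=> j s hs; apply: Hd; have := Rmin_l (a + d/2) b; lra.
have Hct : forall j eps, 0 < eps -> exists del, 0 < del /\ forall s, Rabs (s - tau) < del -> Rabs (H j s - H j tau) < eps.
  move=> j; apply: dcont; apply: Hder; lra.
have Hge : forall j, 0 <= H j tau.
  move=> j; apply: Rnot_lt_le => Hn.
  have [del [del0 Hdel]] := Hct j (- H j tau) ltac:(lra).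
  set s := tau - Rmin (del / 2) ((tau - a) / 2).
  have sm1 := Rmin_l (del / 2) ((tau - a) / 2).
  have sm2 := Rmin_r (del / 2) ((tau - a) / 2).
  have sm0 : 0 < Rmin (del / 2) ((tau - a) / 2) by apply: Rmin_pos; lra.
  have := Hdel s ltac:(rewrite /s Rabs_left; lra).
  have := Hbefore j s ltac:(rewrite /s; lra).
  move=> H1 /Rabs_def2; lra.
case: (classic (forall j, 0 < H j tau)) => [Hall|Hnall].
  have [d2 [d20 Hd2]] : exists d, 0 < d /\ forall j s, tau <= s < tau + d -> 0 < H j s.
    apply: (fin_choice_del (fun j d => forall s, tau <= s < tau + d -> 0 < H j s)).
      move=> j dd d' hd P s hs; apply: P; lra.
    move=> j; have [del [del0 Hdel]] := Hct j (H j tau) (Hall j).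
    exists del; split => // s hs; have := Hdel s ltac:(rewrite Rabs_pos_eq; lra); move/Rabs_def2; lra.
  case: (Rle_lt_dec b tau) => btau.
    have Sb : S b.
      split; first lra. move=> j s hs.
      case: (Rlt_le_dec s tau) => st; first by apply: Hbefore; lra.
      apply: Hd2; lra.
    have := Sb.2 k0 t0 ltac:(lra); lra.
  have : Rmin (tau + d2 / 2) b <= tau; last first.
    have := Rmin_glb_lt (tau + d2/2) b tau ltac:(lra) btau; lra.
  apply: Hub; split.
    split; [have := Rmin_glb (tau + d2/2) b a ltac:(lra) ltac:(lra); lra| exact: Rmin_r].
  move=> j s hs.
  case: (Rlt_le_dec s tau) => st; first by apply: Hbefore; lra.
  apply: Hd2; have := Rmin_l (tau + d2/2) b; lra.
have [k Hk] := not_all_ex_not _ _ Hnall.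
have Hk0 : H k tau = 0 by have := Hge k; lra.
have dpos := Hkey k tau ltac:(lra) Hk0 Hge Hbefore.
have [del [del0 Hdel]] := dpos_left (H k) tau (dH k tau) (Hder k tau ltac:(lra)) dpos.
set hh := - Rmin (del / 2) ((tau - a) / 2).
have sm1 := Rmin_l (del / 2) ((tau - a) / 2).
have sm2 := Rmin_r (del / 2) ((tau - a) / 2).
have sm0 : 0 < Rmin (del / 2) ((tau - a) / 2) by apply: Rmin_pos; lra.
have := Hdel hh ltac:(rewrite /hh; lra).
have := Hbefore k (tau + hh) ltac:(rewrite /hh; lra).
lra.
Qed.

Lemma dplus f g t a b : derivable_pt_lim f t a -> derivable_pt_lim g t b ->
  derivable_pt_lim (fun s => f s + g s) t (a + b).
Proof. move=> Hf Hg; exact: (derivable_pt_lim_plus f g t a b Hf Hg). Qed.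
Lemma dminus f g t a b : derivable_pt_lim f t a -> derivable_pt_lim g t b ->
  derivable_pt_lim (fun s => f s - g s) t (a - b).
Proof. move=> Hf Hg; exact: (derivable_pt_lim_minus f g t a b Hf Hg). Qed.
Lemma dscal c f t a : derivable_pt_lim f t a -> derivable_pt_lim (fun s => c * f s) t (c * a).
Proof. move=> Hf; exact: (derivable_pt_lim_scal f c t a Hf). Qed.
Lemma dconst c t : derivable_pt_lim (fun _ => c) t 0.
Proof. exact: (derivable_pt_lim_const c t). Qed.
Lemma dexp k t : derivable_pt_lim (fun s => exp (k * s)) t (k * exp (k * t)).
Proof.
have H := derivable_pt_lim_comp (fun s => k * s) exp t k (exp (k * t)).
rewrite Rmult_comm; apply: H; last exact: derivable_pt_lim_exp.
have := dscal k id t 1 (derivable_pt_lim_id t); rewrite Rmult_1_r; exact.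
Qed.
Lemma dext f g t a : (forall s, f s = g s) -> derivable_pt_lim f t a -> derivable_pt_lim g t a.
Proof. move=> H Hf e e0; have [d Hd] := Hf e e0; exists d => h h0 hd; rewrite -!H; exact: Hd. Qed.

Definition rc (f : R -> R) a := forall eps, 0 < eps -> exists del, 0 < del /\
  forall t, a <= t < a + del -> Rabs (f t - f a) < eps.

Lemma rc_der f a l : derivable_pt_lim f a l -> rc f a.
Proof.
move=> Hd eps e0; have [del [d0 H]] := dcont f a l Hd eps e0.
exists del; split => // t ht; apply: H; rewrite Rabs_pos_eq; lra.
Qed.
Lemma rc_plus f g a : rc f a -> rc g a -> rc (fun t => f t + g t) a.
Proof.
move=> Hf Hg eps e0.
have [d1 [d10 H1]] := Hf (eps/2) ltac:(lra).
have [d2 [d20 H2]] := Hg (eps/2) ltac:(lra).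
exists (Rmin d1 d2); split; first exact: Rmin_pos.
move=> t ht; have := Rmin_l d1 d2; have := Rmin_r d1 d2 => m2 m1.
have := H1 t ltac:(lra); have := H2 t ltac:(lra).
move=> /Rabs_def2 [? ?] /Rabs_def2 [? ?]; apply: Rabs_def1; lra.
Qed.
Lemma rc_scal c f a : rc f a -> rc (fun t => c * f t) a.
Proof.
move=> Hf eps e0.
have [d1 [d10 H1]] := Hf (eps / (Rabs c + 1)) ltac:(apply: Rdiv_lt_0_compat; have := Rabs_pos c; lra).
exists d1; split => // t ht.
rewrite -Rmult_minus_distr_l Rabs_mult.
have := H1 t ht; have := Rabs_pos c; have := Rabs_pos (f t - f a) => p1 p2 h.
have : eps / (Rabs c + 1) * Rabs c < eps.
  rewrite /Rdiv Rmult_assoc (Rmult_comm (/ _)); apply: Rlt_le_trans (_ : eps * 1 <= eps); last lra.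
  apply: Rmult_lt_compat_l => //; apply: (Rmult_lt_reg_r (Rabs c + 1)); first lra.
  rewrite Rmult_assoc Rinv_l; lra.
nra.
Qed.
Lemma rc_minus f g a : rc f a -> rc g a -> rc (fun t => f t - g t) a.
Proof.
move=> Hf Hg; have := rc_plus f (fun t => -1 * g t) a Hf (rc_scal (-1) g a Hg).
move=> H eps e0; have [d [d0 Hd]] := H eps e0; exists d; split => // t ht.
have := Hd t ht; by have -> : f t + -1 * g t - (f a + -1 * g a) = f t - g t - (f a - g a) by ring.
Qed.
Lemma rc_const c a : rc (fun _ => c) a.
Proof. move=> eps e0; exists 1; split => [|t _]; [lra|rewrite Rminus_diag Rabs_R0; lra]. Qed.
Lemma rc_ext f g a : (forall s, f s = g s) -> rc f a -> rc g a.
Proof. move=> H Hf e e0; have [d [d0 Hd]] := Hf e e0; exists d; split => // t ht; rewrite -!H; exact: Hd. Qed.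

Lemma exp_bound k t : 0 <= k -> 0 <= t -> exp (- (k * t)) <= / (1 + k * t).
Proof.
move=> k0 t0; rewrite exp_Ropp; apply: Rinv_le_contravar; first nra.
exact: exp_ineq1_le.
Qed.

Lemma prod_lb T F eta A : - eta <= T <= 3 -> - (eta * A) <= F <= A -> 0 <= eta <= 1 -> 0 <= A ->
  - (3 * eta * A) <= T * F.
Proof.
move=> HT HF He HA; case: (Rle_lt_dec 0 F) => HF0.
  have : - eta * F <= T * F by apply: Rmult_le_compat_r; lra.
  nra.
have : 3 * F <= T * F by nra.
nra.
Qed.

Lemma exp_le x y : x <= y -> exp x <= exp y.
Proof. case=> [h|->]; [left; exact: exp_increasing|right; done]. Qed.

Arguments rc_plus {f g a}. Arguments rc_minus {f g a}. Arguments rc_scal {c f a}.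
Arguments dplus {f g t a b}. Arguments dminus {f g t a b}. Arguments dscal {c f t a}.

Lemma avg_bound N (x : vec N) l e : (0 < N)%nat -> (forall i, Rabs (x i - l) < e) ->
  Rabs (/ INR N * sumR x - l) < e.
Proof.
move=> HN Hx.
have N0 : 0 < INR N by apply: lt_0_INR; apply/ltP.
have -> : / INR N * sumR x - l = / INR N * sumR (fun i => x i - l).
  rewrite /Rminus sumR_add sumR_const; field; lra.
rewrite Rabs_mult Rabs_inv Rabs_pos_eq; last lra.
have := sumR_lt (fun i => Rabs (x i - l)) (fun _ => e) HN Hx; rewrite sumR_const => h.
have := sumR_abs (fun i => x i - l) => h2.
apply: (Rmult_lt_reg_l (INR N)) => //; rewrite -Rmult_assoc Rinv_r; lra.
Qed.

Section Main.
Variable N : nat.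
Hypothesis HN : (0 < N)%nat.
Variables theta delta : 'I_N -> R.
Hypothesis Htheta : forall i, 0 < theta i.
Hypothesis Hdelta : forall i, 0 < delta i.
Variables f g : 'I_N -> vec N -> R.
Hypothesis monof : forall i x y, (forall k, x k <= y k) -> f i x <= f i y.
Hypothesis monog : forall i x y, (forall k, x k <= y k) -> g i x <= g i y.
Hypothesis f0 : forall i, f i (fun _ => 0) = 0.
Hypothesis g0 : forall i, g i (fun _ => 0) = 0.
Hypothesis concf : forall i, concave (f i).
Hypothesis concg : forall i, concave (g i).
Variables Rs Ts : R -> vec N.
Hypothesis Hsol : SURQT_solution f g theta delta Rs Ts.
Hypothesis Hinit : in_Omega (Rs 0) (Ts 0).

Definition dR t i := Ts t i * f i (Rs t) - Rs t i * g i (Ts t) - theta i * Rs t i.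
Definition dT t i := Rs t i * g i (Ts t) - Ts t i * f i (Rs t) + delta i * (1 - Rs t i - Ts t i).

Lemma HdR t i : 0 < t -> derivable_pt_lim (fun s => Rs s i) t (dR t i).
Proof. move=> ht; exact: (Hsol.1 t i ht).1. Qed.
Lemma HdT t i : 0 < t -> derivable_pt_lim (fun s => Ts s i) t (dT t i).
Proof. move=> ht; exact: (Hsol.1 t i ht).2. Qed.
Lemma rcR i : rc (fun s => Rs s i) 0.
Proof. move=> e e0; have [d [d0 Hd]] := Hsol.2 i e e0; exists d; split => // t ht; rewrite Rplus_0_l in ht; exact: (Hd t ht).1. Qed.
Lemma rcT i : rc (fun s => Ts s i) 0.
Proof. move=> e e0; have [d [d0 Hd]] := Hsol.2 i e e0; exists d; split => // t ht; rewrite Rplus_0_l in ht; exact: (Hd t ht).2. Qed.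

Lemma fbounds (h : vec N -> R) (x : vec N) eta :
  (forall x y, (forall k, x k <= y k) -> h x <= h y) -> concave h -> h (fun _ => 0) = 0 ->
  0 <= eta <= 1 -> (forall k, - eta <= x k <= 3) ->
  eta * h (fun _ => -1) <= h x <= h (fun _ => 3).
Proof.
move=> Hm Hc H0 He Hx; split.
  apply: Rle_trans (L_low N h Hc H0 eta He) _; apply: Hm => k; have := Hx k; lra.
apply: Hm => k; have := Hx k; lra.
Qed.

Lemma invariance_eps t lam : 0 <= t -> 0 < lam <= 1 ->
  forall i, - lam < Rs t i /\ - lam < Ts t i /\ Rs t i + Ts t i < 1 + lam.
Proof.
move=> t0 Hlam.
set A := sumR (fun i => - f i (fun _ => -1) + f i (fun _ => 3) - g i (fun _ => -1) + g i (fun _ => 3)).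
have Aterm : forall i, 0 <= - f i (fun _ => -1) /\ 0 <= f i (fun _ => 3) /\ 0 <= - g i (fun _ => -1) /\ 0 <= g i (fun _ => 3).
  move=> i; have := monof i (fun _ => -1) (fun _ => 0) (fun _ => ltac:(lra)).
  have := monof i (fun _ => 0) (fun _ => 3) (fun _ => ltac:(lra)).
  have := monog i (fun _ => -1) (fun _ => 0) (fun _ => ltac:(lra)).
  have := monog i (fun _ => 0) (fun _ => 3) (fun _ => ltac:(lra)).
  rewrite f0 g0; lra.
have Ab : forall i, - f i (fun _ => -1) <= A /\ f i (fun _ => 3) <= A /\ - g i (fun _ => -1) <= A /\ g i (fun _ => 3) <= A.
  move=> i; have := sumR_term (fun i => - f i (fun _ => -1) + f i (fun _ => 3) - g i (fun _ => -1) + g i (fun _ => 3)) i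
    (fun j => ltac:(have := Aterm j; lra)).
  have := Aterm i; rewrite -/A /=; lra.
have A0 : 0 <= A by have := Ab (Ordinal HN); have := Aterm (Ordinal HN); lra.
set Sd := sumR delta. set St := sumR theta.
have Sd0 : forall i, delta i <= Sd by move=> i; apply: sumR_term => j; have := Hdelta j; lra.
have St0 : forall i, theta i <= St by move=> i; apply: sumR_term => j; have := Htheta j; lra.
set L := 1 + 4 * A + Sd + St.
have L0 : 0 < L by have := Sd0 (Ordinal HN); have := St0 (Ordinal HN); have := Hdelta (Ordinal HN); have := Htheta (Ordinal HN); rewrite /L; lra.
set eps := lam * exp (- (L * t)).
set eta := fun s => eps * exp (L * s).
have eta_pos : forall s, 0 < eta s.
  move=> s; rewrite /eta /eps; apply: Rmult_lt_0_compat; [apply: Rmult_lt_0_compat; [lra|exact: exp_pos]|exact: exp_pos].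
have eta_le : forall s, s <= t -> eta s <= lam.
  move=> s st; rewrite /eta /eps Rmult_assoc -exp_plus.
  have : exp (- (L * t) + L * s) <= 1.
    rewrite -exp_0; apply: exp_le; nra.
  nra.
have eta_t : eta t = lam.
  rewrite /eta /eps Rmult_assoc -exp_plus.
  have -> : - (L * t) + L * t = 0 by ring.
  by rewrite exp_0 Rmult_1_r.
have deta : forall s, derivable_pt_lim eta s (L * eta s).
  move=> s; have := @dscal eps _ s _ (dexp L s); rewrite /eta.
  by have -> : eps * (L * exp (L * s)) = L * (eps * exp (L * s)) by ring.
pose I := ('I_3 * 'I_N)%type.
pose H (p : I) s := if (nat_of_ord p.1 == 0)%N then Rs s p.2 + eta s
   else if (nat_of_ord p.1 == 1)%N then Ts s p.2 + eta s else 1 + eta s - Rs s p.2 - Ts s p.2.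
pose dH (p : I) s := if (nat_of_ord p.1 == 0)%N then dR s p.2 + L * eta s
   else if (nat_of_ord p.1 == 1)%N then dT s p.2 + L * eta s else L * eta s - dR s p.2 - dT s p.2.
have rceta : rc eta 0 := rc_der eta 0 _ (deta 0).
have Hpos : forall p s, 0 <= s <= t -> 0 < H p s.
  apply: (barrier I H dH 0 t t0).
  - move=> [[[|[|[|c]]] hc] i] s hs //; rewrite /H /dH /=.
    + apply: dplus; [apply: HdR; lra| exact: deta].
    + apply: dplus; [apply: HdT; lra| exact: deta].
    + have -> : L * eta s - dR s i - dT s i = 0 + L * eta s - dR s i - dT s i by ring.
      apply: dminus; [apply: dminus; [apply: dplus; [exact: dconst|exact: deta]|apply: HdR; lra]|apply: HdT; lra].
  - move=> [[[|[|[|c]]] hc] i] //; rewrite /H /=.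
    + exact: rc_plus (rcR i) rceta.
    + exact: rc_plus (rcT i) rceta.
    + exact: rc_minus (rc_minus (rc_plus (rc_const 1 0) rceta) (rcR i)) (rcT i).
  - move=> [[[|[|[|c]]] hc] i] //; rewrite /H /=; have := Hinit i; have := eta_pos 0; lra.
  - move=> [[c hc] i] s hs Hz Hall _.
    have BR : forall j, - eta s <= Rs s j.
      move=> j; have := Hall (@Ordinal 3 0 isT, j); rewrite /H /=; lra.
    have BT : forall j, - eta s <= Ts s j.
      move=> j; have := Hall (@Ordinal 3 1 isT, j); rewrite /H /=; lra.
    have BS : forall j, Rs s j + Ts s j <= 1 + eta s.
      move=> j; have := Hall (@Ordinal 3 2 isT, j); rewrite /H /=; lra.
    have es := eta_le s ltac:(lra). have e0 := eta_pos s.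
    have BR3 : forall k, - eta s <= Rs s k <= 3 by move=> k; have := BR k; have := BT k; have := BS k; lra.
    have BT3 : forall k, - eta s <= Ts s k <= 3 by move=> k; have := BR k; have := BT k; have := BS k; lra.
    have [fl fu] := fbounds (f i) (Rs s) (eta s) (monof i) (concf i) (f0 i) ltac:(lra) BR3.
    have [gl gu] := fbounds (g i) (Ts s) (eta s) (monog i) (concg i) (g0 i) ltac:(lra) BT3.
    have [a1 [a2 [a3 a4]]] := Ab i.
    have fl' : - (eta s * A) <= f i (Rs s) by nra.
    have gl' : - (eta s * A) <= g i (Ts s) by nra.
    have fu' : f i (Rs s) <= A by lra.
    have gu' : g i (Ts s) <= A by lra.
    have di := Sd0 i. have ti := St0 i. have dpi := Hdelta i. have tpi := Htheta i.
    have eA : 0 <= eta s * A by nra.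
    case: c hc Hz => [|[|[|c]]] hc Hz //; rewrite /dH /=; rewrite /H /= in Hz.
    + have p1 := prod_lb (Ts s i) (f i (Rs s)) (eta s) A (BT3 i) (conj fl' fu') ltac:(lra) A0.
      have p2 : - (eta s * A) <= eta s * g i (Ts s) by nra.
      have Ri : Rs s i = - eta s by lra.
      rewrite /dR Ri /L.
      have : Sd * eta s >= 0 by nra.
      have : St * eta s >= 0 by nra.
      have : theta i * eta s > 0 by nra.
      nra.
    + have p1 := prod_lb (Rs s i) (g i (Ts s)) (eta s) A (BR3 i) (conj gl' gu') ltac:(lra) A0.
      have p2 : - (eta s * A) <= eta s * f i (Rs s) by nra.
      have Ti : Ts s i = - eta s by lra.
      have p3 : - (delta i * eta s) <= delta i * (1 - Rs s i - Ts s i) by have := BS i; nra.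
      rewrite /dT Ti /L.
      have : Sd * eta s >= delta i * eta s by nra.
      have : St * eta s >= 0 by nra.
      nra.
    + have p3 : - (theta i * eta s) <= theta i * Rs s i by have := BR i; nra.
      rewrite /dR /dT /L.
      have : Sd * eta s >= 0 by nra.
      have : St * eta s >= theta i * eta s by nra.
      have : delta i * (1 - Rs s i - Ts s i) = - (delta i * eta s) by rewrite (_ : 1 - Rs s i - Ts s i = - eta s); [ring|lra].
      nra.
move=> i; split; [|split].
- have := Hpos (@Ordinal 3 0 isT, i) t ltac:(lra); rewrite /H /= eta_t; lra.
- have := Hpos (@Ordinal 3 1 isT, i) t ltac:(lra); rewrite /H /= eta_t; lra.
- have := Hpos (@Ordinal 3 2 isT, i) t ltac:(lra); rewrite /H /= eta_t; lra.
Qed.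
Lemma inv t : 0 <= t -> forall i, 0 <= Rs t i /\ 0 <= Ts t i /\ Rs t i + Ts t i <= 1.
Proof.
move=> t0 i; split; [|split].
- apply: Rnot_lt_le => Hn.
  have := (invariance_eps t (Rmin 1 (- Rs t i)) t0 ltac:(split; [apply: Rmin_pos; lra|exact: Rmin_l]) i).1.
  have := Rmin_r 1 (- Rs t i); lra.
- apply: Rnot_lt_le => Hn.
  have := (invariance_eps t (Rmin 1 (- Ts t i)) t0 ltac:(split; [apply: Rmin_pos; lra|exact: Rmin_l]) i).2.1.
  have := Rmin_r 1 (- Ts t i); lra.
- apply: Rnot_lt_le => Hn.
  have := (invariance_eps t (Rmin 1 (Rs t i + Ts t i - 1)) t0 ltac:(split; [apply: Rmin_pos; lra|exact: Rmin_l]) i).2.2.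
  have := Rmin_r 1 (Rs t i + Ts t i - 1); lra.
Qed.

Variable Jf : 'I_N -> 'I_N -> R.
Hypothesis Hlin : forall i x, f i x <= sumR (fun j => Jf i j * x j).
Hypothesis HJpos : forall i j, 0 <= Jf i j.
Variable w : vec N.
Variable kappa : R.
Hypothesis wpos : forall i, 0 < w i.
Hypothesis kpos : 0 < kappa.
Hypothesis Hw : forall i, sumR (fun j => Jf i j * w j) - theta i * w i <= - (kappa * w i).

Definition K := sumR (fun j => / w j).

Lemma decay eps : 0 < eps -> forall t, 0 <= t -> forall i, Rs t i < w i * (K * exp (- kappa * t) + eps).
Proof.
move=> eps0 t t0.
have K0 : forall i, / w i <= K by move=> i; apply: sumR_term => j; left; apply: Rinv_0_lt_compat.
pose H i s := w i * (K * exp (- kappa * s) + eps) - Rs s i.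
pose dH i s := w i * (K * (- kappa * exp (- kappa * s)) + 0) - dR s i.
have Hpos : forall i s, 0 <= s <= t -> 0 < H i s.
  apply: (barrier 'I_N H dH 0 t t0).
  - move=> i s hs; rewrite /H /dH; apply: dminus; last by apply: HdR; lra.
    apply: dscal; apply: dplus; [apply: dscal; exact: dexp|exact: dconst].
  - move=> i; rewrite /H; apply: rc_minus; last exact: rcR.
    apply: rc_scal; apply: rc_plus; last exact: rc_const.
    apply: rc_scal; exact: rc_der _ _ _ (dexp _ 0).
  - move=> i; rewrite /H Rmult_0_r exp_0 Rmult_1_r.
    have := Hinit i; have := K0 i; have := wpos i => wp Ki Hi.
    have : w i * K >= 1.
      have : w i * / w i = 1 by field; lra.
      nra.
    nra.
  - move=> i s hs Hz Hall _; rewrite /H in Hz; rewrite /dH.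
    have [Rp [Tp ST]] := inv s ltac:(lra) i.
    set e := exp (- kappa * s). have e0 : 0 < e by exact: exp_pos.
    set be := K * e + eps.
    have Kp : 0 <= K by apply: sumR_ge0 => j; left; apply: Rinv_0_lt_compat.
    have be0 : 0 < be by rewrite /be; nra.
    have Rj : forall j, Rs s j <= w j * be by move=> j; have := Hall j; rewrite /H -/e -/be; lra.
    have Ri : Rs s i = w i * be by move: Hz; rewrite -/e -/be; lra.
    have Rnn : forall j, 0 <= Rs s j by move=> j; exact: (inv s ltac:(lra) j).1.
    have fnn : 0 <= f i (Rs s) by rewrite -(f0 i); apply: monof => k; exact: Rnn.
    have gnn : 0 <= g i (Ts s).
      rewrite -(g0 i); apply: monog => k; exact: (inv s ltac:(lra) k).2.1.
    have fle : f i (Rs s) <= be * sumR (fun j => Jf i j * w j).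
      apply: Rle_trans (Hlin i (Rs s)) _; rewrite -sumR_scal; apply: sumR_le => j.
      have := Rj j; have := HJpos i j; nra.
    have := Hw i; have := wpos i; have := Htheta i => th wp Hwi.
    have T1 : Ts s i <= 1 by lra.
    have p1 : Ts s i * f i (Rs s) <= f i (Rs s) by nra.
    have p2 : 0 <= Rs s i * g i (Ts s) by nra.
    have p3 : be * (sumR (fun j => Jf i j * w j) - theta i * w i) <= be * (- (kappa * w i)) by apply: Rmult_le_compat_l; lra.
    have dRle : dR s i <= - (kappa * w i * be).
      rewrite /dR; have : theta i * Rs s i = be * (theta i * w i) by rewrite Ri; ring.
      nra.
    have E : w i * (K * (- kappa * e) + 0) = - (kappa * w i * be) + kappa * w i * eps by rewrite /be; ring.
    rewrite E; have : 0 < kappa * w i * eps by apply: Rmult_lt_0_compat; [nra|lra].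
    lra.
move=> i; have := Hpos i t ltac:(lra); rewrite /H; lra.
Qed.

Lemma Rconv e : 0 < e -> exists M, 0 <= M /\ forall t, M <= t -> forall i, 0 <= Rs t i < e.
Proof.
move=> e0.
set W := sumR w.
have Ww : forall i, w i <= W by move=> i; apply: sumR_term => j; left; exact: wpos.
have W0 : 0 < W by have := Ww (Ordinal HN); have := wpos (Ordinal HN); lra.
have K0 : 0 <= K by apply: sumR_ge0 => j; left; apply: Rinv_0_lt_compat; exact: wpos.
set eps := e / (2 * W).
have eps0 : 0 < eps by apply: Rdiv_lt_0_compat; lra.
exists (2 * W * K / (kappa * e)); split.
  apply: Rmult_le_pos; [nra| left; apply: Rinv_0_lt_compat; nra].
move=> t Mt i.
have t0 : 0 <= t by apply: Rle_trans Mt; apply: Rmult_le_pos; [nra| left; apply: Rinv_0_lt_compat; nra].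
split; first exact: (inv t t0 i).1.
have H := decay eps eps0 t t0 i.
have Eb := exp_bound kappa t ltac:(lra) t0.
rewrite (_ : - kappa * t = - (kappa * t)) in H; last ring.
set E := exp (- (kappa * t)) in H Eb.
have E0 : 0 < E by exact: exp_pos.
have wi := Ww i. have wp := wpos i.
have h1 : w i * eps <= e / 2.
  rewrite /eps; apply: (Rmult_le_reg_r (2 * W)); first lra.
  have -> : w i * (e / (2 * W)) * (2 * W) = w i * e by field; lra.
  nra.
have h2 : 2 * W * K <= kappa * e * t.
  have : 2 * W * K / (kappa * e) * (kappa * e) <= t * (kappa * e) by apply: Rmult_le_compat_r; [nra|lra].
  have -> : 2 * W * K / (kappa * e) * (kappa * e) = 2 * W * K by field; nra.
  lra.
have h3 : E * (1 + kappa * t) <= 1.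
  have : E * (1 + kappa * t) <= / (1 + kappa * t) * (1 + kappa * t) by apply: Rmult_le_compat_r; nra.
  rewrite Rinv_l; nra.
have WKE : 0 <= W * K * E by apply: Rmult_le_pos; [nra|lra].
have h4 : W * K * E <= e / 2.
  case: (Rle_lt_dec t 0) => tp.
    have tz : t = 0 by lra.
    rewrite tz Rmult_0_r in h2.
    have WK : W * K <= 0 by lra.
    have Kn : K <= 0 by apply: (Rmult_le_reg_l W) => //; rewrite Rmult_0_r; lra.
    have KK : K = 0 by lra.
    rewrite KK; lra.
  have kt : 0 < kappa * t by nra.
  have a1 : W * K * E * (kappa * t) <= W * K by have := Rmult_le_compat_l (W * K) _ _ ltac:(nra) h3; nra.
  have a2 : (2 * (W * K * E)) * (kappa * t) <= e * (kappa * t) by nra.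
  have a3 := Rmult_le_reg_r _ _ _ kt a2.
  lra.
have h5 : w i * K * E <= W * K * E by apply: Rmult_le_compat_r; [lra|apply: Rmult_le_compat_r; lra].
nra.
Qed.

Lemma Tconv gam : 0 < gam -> exists M, forall t, M <= t -> forall i, 1 - gam < Ts t i <= 1.
Proof.
move=> g0'.
set J := fun i => sumR (Jf i).
have J0 : forall i, 0 <= J i by move=> i; apply: sumR_ge0 => j; exact: HJpos.
set Q := sumR (fun k => J k / delta k).
have QJ : forall i, J i / delta i <= Q.
  move=> i; apply: sumR_term => k; apply: Rmult_le_pos; [exact: J0|left; apply: Rinv_0_lt_compat; exact: Hdelta].
have Q0 : 0 <= Q.
  apply: sumR_ge0 => k; apply: Rmult_le_pos; [exact: J0|left; apply: Rinv_0_lt_compat; exact: Hdelta].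
set eta := gam / (4 * (1 + Q)).
have eta0 : 0 < eta by apply: Rdiv_lt_0_compat; lra.
have etaQ : eta * (1 + Q) = gam / 4 by rewrite /eta; field; lra.
have [M0 [M00 HM0]] := Rconv eta eta0.
set t0 := M0 + 1.
have t0d : t0 = M0 + 1 by [].
set Dd := sumR (fun k => / delta k).
have Dd0 : forall i, / delta i <= Dd by move=> i; apply: sumR_term => k; left; apply: Rinv_0_lt_compat; exact: Hdelta.
exists (t0 + 2 * Dd / gam) => t Mt i.
have Dp : 0 <= Dd by have := Dd0 i; have := Rinv_0_lt_compat _ (Hdelta i); lra.
have DG : 0 <= 2 * Dd / gam by apply: Rmult_le_pos; [lra|left; apply: Rinv_0_lt_compat; lra].
have tt0 : t0 <= t by lra.
have t00 : 0 < t0 by rewrite /t0; lra.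
split; last by have := inv t ltac:(lra) i; lra.
set dl := delta i. have dl0 : 0 < dl := Hdelta i.
set c := exp (dl * t0).
pose H (_ : 'I_1) s := Ts s i - 1 + gam / 2 + c * exp (- dl * s).
pose dH (_ : 'I_1) s := dT s i - 0 + 0 + c * (- dl * exp (- dl * s)).
have Hder : forall s, 0 < s -> derivable_pt_lim (H ord0) s (dH ord0 s).
  move=> s s0; rewrite /H /dH; apply: dplus; last by apply: dscal; exact: dexp.
  apply: dplus; last exact: dconst. apply: dminus; last exact: dconst. exact: HdT.
have ct0 : c * exp (- dl * t0) = 1.
  rewrite /c -exp_plus; have -> : dl * t0 + - dl * t0 = 0 by ring. exact: exp_0.
have Hpos : forall k s, t0 <= s <= t -> 0 < H k s.
  apply: (barrier 'I_1 H dH t0 t tt0).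
  - move=> k s hs; apply: Hder; lra.
  - move=> k; apply: rc_der; apply: (Hder t0 t00).
  - move=> k; rewrite /H ct0; have := inv t0 ltac:(lra) i; lra.
  - move=> k s hs Hz _ _; rewrite /H in Hz; rewrite /dH.
    have s0 : 0 < s by lra.
    set E := c * exp (- dl * s) in Hz *.
    have E0 : 0 < E by apply: Rmult_lt_0_compat; exact: exp_pos.
    have [Rp [Tp ST]] := inv s ltac:(lra) i.
    have Rsm : forall j, 0 <= Rs s j < eta by move=> j; apply: HM0; lra.
    have fnn : 0 <= f i (Rs s) by rewrite -(f0 i); apply: monof => k'; exact: (Rsm k').1.
    have gnn : 0 <= g i (Ts s) by rewrite -(g0 i); apply: monog => k'; exact: (inv s ltac:(lra) k').2.1.
    have fle : f i (Rs s) <= eta * J i.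
      apply: Rle_trans (Hlin i (Rs s)) _; rewrite /J -sumR_scal; apply: sumR_le => j.
      have := Rsm j; have := HJpos i j; nra.
    have T1 : Ts s i <= 1 by lra.
    have p1 : Ts s i * f i (Rs s) <= eta * J i by nra.
    have p2 : 0 <= Rs s i * g i (Ts s) by nra.
    have Ri := (Rsm i).2.
    have Jd : eta * dl + eta * J i <= dl * (gam / 4).
      have := QJ i; rewrite -/dl => qj.
      have : eta * (J i / dl) <= eta * Q by apply: Rmult_le_compat_l; lra.
      have -> : eta * (J i / dl) = eta * J i / dl by rewrite /Rdiv; ring.
      move=> hq.
      have : eta * J i <= eta * Q * dl.
        have := Rmult_le_compat_r dl _ _ ltac:(lra) hq.
        by have -> : eta * J i / dl * dl = eta * J i by field; lra.
      move: etaQ; nra.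
    have E2 : - dl * exp (- dl * s) * c = - (dl * E) by rewrite /E; ring.
    rewrite /dT (Rmult_comm c) E2.
    have Ti : Ts s i = 1 - gam / 2 - E by lra.
    have : dl * (1 - Rs s i - Ts s i) >= dl * (gam / 2 + E - eta) by rewrite Ti; apply: Rle_ge; apply: Rmult_le_compat_l; lra.
    rewrite -/dl; have : 0 < dl * gam by nra. lra.
have := Hpos ord0 t ltac:(lra); rewrite /H.
have : c * exp (- dl * t) < gam / 2.
  have -> : c * exp (- dl * t) = exp (- (dl * (t - t0))) by rewrite /c -exp_plus; congr exp; ring.
  have tt : 0 <= t - t0 by lra.
  apply: Rle_lt_trans (exp_bound dl (t - t0) ltac:(lra) tt) _.
  have : 2 / gam <= dl * (t - t0).
    have : 2 * Dd / gam <= t - t0 by lra.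
    have : 2 / (dl * gam) <= 2 * Dd / gam.
      rewrite /Rdiv Rinv_mult; have := Dd0 i; rewrite -/dl => hd.
      have : 0 < / gam by apply: Rinv_0_lt_compat.
      nra.
    move=> h1 h2.
    have : dl * (2 / (dl * gam)) = 2 / gam by field; lra.
    nra.
  move=> h.
  have : gam / 2 * (1 + dl * (t - t0)) > 1.
    have : gam / 2 * (dl * (t - t0)) >= gam / 2 * (2 / gam) by apply: Rle_ge; apply: Rmult_le_compat_l; lra.
    have -> : gam / 2 * (2 / gam) = 1 by field; lra.
    nra.
  move=> h2; apply: (Rmult_lt_reg_r (1 + dl * (t - t0))); first nra.
  rewrite Rinv_l; nra.
lra.
Qed.

Lemma main_concl :
  (forall i, tends_at_infty (fun t => Rs t i) 0 /\ tends_at_infty (fun t => Ts t i) 1) /\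
  tends_at_infty (fun t => / INR N * sumR (fun i => Rs t i)) 0 /\
  tends_at_infty (fun t => / INR N * sumR (fun i => Ts t i)) 1.
Proof.
have UR : forall e, 0 < e -> exists M, forall t, M <= t -> forall i, Rabs (Rs t i - 0) < e.
  move=> e e0; have [M [_ HM]] := Rconv e e0; exists M => t tM i.
  have := HM t tM i; rewrite Rminus_0_r => h; rewrite Rabs_pos_eq; lra.
have UT : forall e, 0 < e -> exists M, forall t, M <= t -> forall i, Rabs (Ts t i - 1) < e.
  move=> e e0; have [M HM] := Tconv e e0; exists M => t tM i.
  have := HM t tM i => h; rewrite Rabs_left1; lra.
split; [|split].
- move=> i; split => e e0.
  + have [M HM] := UR e e0; exists M => t tM; exact: HM.
  + have [M HM] := UT e e0; exists M => t tM; exact: HM.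
- move=> e e0; have [M HM] := UR e e0; exists M => t tM; exact: avg_bound (fun i => Rs t i) 0 e HN (HM t tM).
- move=> e e0; have [M HM] := UT e e0; exists M => t tM; exact: avg_bound (fun i => Ts t i) 1 e HN (HM t tM).
Qed.

End Main.

Theorem theorem3 (N : nat) (HN : (0 < N)%nat)
  (ER ET : 'I_N -> 'I_N -> Prop)
  (HER : strongly_connected ER) (HET : strongly_connected ET)
  (theta delta : 'I_N -> R)
  (Htheta : forall i, 0 < theta i) (Hdelta : forall i, 0 < delta i)
  (f g : 'I_N -> vec N -> R)
  (C1f : forall i j, depends_on (f i) j <-> ER i j)
  (C1g : forall i j, depends_on (g i) j <-> ET i j)
  (C2f : forall i, f i (fun _ => 0) = 0) (C2g : forall i, g i (fun _ => 0) = 0)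
  (C3f : forall i, C2 (f i)) (C3g : forall i, C2 (g i))
  (C4f : forall i j, ER i j -> strictly_incr_in (f i) j)
  (C4g : forall i j, ET i j -> strictly_incr_in (g i) j)
  (C5f : forall i, concave (f i)) (C5g : forall i, concave (g i))
  (Jf : 'I_N -> 'I_N -> R)
  (HJf : forall i j, partial_deriv (f i) j (fun _ => 0) (Jf i j))
  (Hs : exists s, is_spectral_abscissa
          (fun i j => Jf i j - (if i == j then theta i else 0)) s /\ s < 0)
  (Rs Ts : R -> vec N)
  (Hsol : SURQT_solution f g theta delta Rs Ts)
  (Hinit : in_Omega (Rs 0) (Ts 0)) :
  (forall i, tends_at_infty (fun t => Rs t i) 0 /\ tends_at_infty (fun t => Ts t i) 1) /\
  tends_at_infty (fun t => / INR N * sumR (fun i => Rs t i)) 0 /\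
  tends_at_infty (fun t => / INR N * sumR (fun i => Ts t i)) 1.
Proof.
have monof : forall i x y, (forall k, x k <= y k) -> f i x <= f i y.
  move=> i; apply: vec_mono => j Hd; apply: C4f; exact: (C1f i j).1.
have monog : forall i x y, (forall k, x k <= y k) -> g i x <= g i y.
  move=> i; apply: vec_mono => j Hd; apply: C4g; exact: (C1g i j).1.
have gradf : forall i, has_grad (f i) (fun _ => 0) (Jf i).
  move=> i; have [Dh [D2h [Hg _]]] := C3f i.
  have E : Dh (fun _ => 0) = Jf i.
    apply: functional_extensionality => j.
    exact: (uniqueness_limite _ _ _ _ (L_D N (f i) (Dh (fun _ => 0)) (C2f i) (Hg _) j) (HJf i j)).
  rewrite -E; exact: Hg.
have Hlin : forall i x, f i x <= sumR (fun j => Jf i j * x j).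
  move=> i x; exact: (L_lin N (f i) (Jf i) (C5f i) (C2f i) (gradf i) x).
have HJpos : forall i j, 0 <= Jf i j.
  move=> i j; exact: (L_Dpos N (f i) (Jf i) (monof i) (C2f i) (gradf i) j).
pose M := fun i j => Jf i j - (if i == j then theta i else 0).
have Mw_eq : forall i (x : vec N), sumR (fun j => M i j * x j) = sumR (fun j => Jf i j * x j) - theta i * x i.
  move=> i x; rewrite -(sumR_delta' i x) -sumR_scal /Rminus -sumR_opp -sumR_add.
  apply: sumR_ext => j; rewrite /M; case: (i == j); ring.
have Hoff : forall i j, i != j -> 0 <= M i j.
  move=> i j ne; rewrite /M (negbTE ne) Rminus_0_r; exact: HJpos.
have Hnoeig : forall a (u : vec N), 0 <= a -> (forall i, sumR (fun j => M i j * u j) = a * u i) -> forall i, u i = 0.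
  move=> a u a0 Hu k; apply: NNPP => Hk.
  have [s [[_ Hmax] s0]] := Hs.
  have : a <= s; last lra.
  apply: (Hmax a 0); exists u, (fun _ => 0); split; first by exists k; left.
  move=> i; split.
  - rewrite -/M Hu; ring.
  - rewrite (sumR_ext _ (fun _ => 0)) ?sumR_0; first ring.
    move=> j; ring.
have [w [wpos Mwneg]] := metzler M HN Hoff Hnoeig.
have [kappa [k0 Hk]] := lowbound (fun i => - sumR (fun j => M i j * w j) / w i) HN
  (fun i => ltac:(apply: Rdiv_lt_0_compat; [have := Mwneg i; lra| exact: wpos])).
have Hw : forall i, sumR (fun j => Jf i j * w j) - theta i * w i <= - (kappa * w i).
  move=> i; rewrite -Mw_eq; have := Hk i => /= hk.
  have := Rmult_le_compat_r (w i) _ _ (Rlt_le _ _ (wpos i)) hk.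
  have -> : - sumR (fun j => M i j * w j) / w i * w i = - sumR (fun j => M i j * w j) by field; have := wpos i; lra.
  lra.
exact: (main_concl N HN theta delta Htheta Hdelta f g monof monog C2f C2g C5f C5g Rs Ts Hsol Hinit
   Jf Hlin HJpos w kappa wpos k0 Hw).
Qed.
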